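(* Let $\pi$ be the policy induced by Dual Gradient Descent with Proxy Assignments (any stepsize and initial prices). For every sample path $\omega$, $$V^\pi[\omega]=\sum_{k\in[K]}\widetilde V^\pi_k\Big[\omega_k\,\Big|\,Z^\pi\big(\tfrac{(k-1)T}K\big)\Big]-\sum_{k\in[K]}\sum_{j\in[n]}\sum_{i\in[m]}c_{ji}\widetilde Z^\pi_{ji,k}\big(\tfrac{kT}K:T\big)-\sum_{k\in[K]}\frac TK\sum_{k'>k}\sum_{i\in[m]}k'g_{k'i}\Bigg(\frac{Z^\pi_i(kT/K)+\widetilde Z^\pi_{i,k}\big(\frac{kT}K:\frac{k'T}K\big)}{k'T/K}\Bigg).$$
   Context: Model. There are $m$ resources and $n$ arrival types; type $j$ has cost vector $c_j\in\mathbb R^m$ and allowed resources $\mathcal S_j\subseteq[m]$. The horizon has $T$ periods partitioned into $K$ epochs ($T$ a multiple of $K$), epoch $k$ being $\mathcal T_k=\{(k-1)T/K+1,\dots,kT/K\}$. In period $t$ one arrival of type $j^t$ occurs; $\omega=(j^1,\dots,j^T)$, $\omega_k=(j^t)_{t\in\mathcal T_k}$. Feasible decisions in period $t$: $\mathcal X^t=\{x\in\{0,1\}^m:\sum_ix_i\le1,\ x_i=0\ \forall i\notin\mathcal S_{j^t}\}$. $Z^\pi_{ji}(t)$ is the number of type-$j$ arrivals assigned to resource $i$ in periods $1..t$, $Z^\pi_i=\sum_jZ^\pi_{ji}$, $Z(t_1:t_2)=Z(t_2)-Z(t_1)$. Each epoch $k$ and resource $i$ has a target $\rho_{ki}\in[0,1]$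 and a convex $L$-Lipschitz $g_{ki}:[0,1]\to\mathbb R_{\ge0}$ with $g_{ki}(\rho_{ki})=0$. The cost is $V^\pi[\omega]=\sum_{j,i}c_{ji}Z^\pi_{ji}(T)+\frac TK\sum_k\sum_ik\,g_{ki}\big(Z^\pi_i(kT/K)/(kT/K)\big)$. Dual Gradient Descent with Proxy Assignments (stepsize $\eta$, initial $\mu^1\in\mathbb R^{K\times m}$): for $t=1,\dots,T$, with $k$ the epoch of $t$: if $t=(k-1)T/K+1$ set $\mu^t_{k'}=\mu^1_{k'}$ for $k'\ge k$; observe $j=j^t$; for every $k'\ge k$ compute the proxy assignment $\tilde x^t_{k'}\in\arg\min_{x\in\mathcal X^t}\sum_ix_i(c_{ji}-\mu^t_{k'i})$; implement $x^t=\tilde x^t_k$; compute $a^t\in\arg\min_{a\in[0,1]^{(K+1-k)\times m}}\sum_{k'\ge k}k'\sum_ig_{k'i}\big(\frac{\sum_{t'\le(k-1)T/K}x^{t'}_i}{k'T/K}+\sum_{k''=k}^{k'}\frac{a_{k''i}}{k'}\big)+\sum_{k'\ge k}\sum_i\mu^t_{k'i}a_{k'i}$; update $\mu^{t+1}_{k'}=\mu^t_{k'}+\eta(a^t_{k'}-\tilde x^t_{k'})$ for $k'\ge k$. Proxy quantities. For $k\le k_1\le k_2\le K$, let $\widetilde Z^\pi_{ji,k}\big(\frac{(k_1-1)T}K:\frac{k_2T}K\big)=\sum_{t\in\mathcal T_k}\sum_{k''=k_1}^{k_2}\tilde x^t_{k''i}\mathbf 1\{j^t=j\}$ and $\widetilde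 Z^\pi_{i,k}(\cdot)=\sum_j\widetilde Z^\pi_{ji,k}(\cdot)$ (so $\frac{kT}K:T$ corresponds to $k_1=k+1$, $k_2=K$, and $(k-1)T/K:T$ to $k_1=k,k_2=K$). The cumulative proxy cost in epoch $k$ given $z\in\mathbb N^m$ is $$\widetilde V^\pi_k[\omega_k\mid z]=\sum_{j,i}c_{ji}\widetilde Z^\pi_{ji,k}\big(\tfrac{(k-1)T}K:T\big)+\frac TK\sum_{k'\ge k}\sum_ik'g_{k'i}\Bigg(\frac{z_i+\widetilde Z^\pi_{i,k}\big(\frac{(k-1)T}K:\frac{k'T}K\big)}{k'T/K}\Bigg).$$ *)

(* Defs.v *)
From mathcomp Require Import all_boot all_order all_algebra.
Set Implicit Arguments. Unset Strict Implicit. Unset Printing Implicit Defensive.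
Import Order.TTheory GRing.Theory Num.Theory.
Local Open Scope ring_scope.

(* Conventions: periods t = 1..T, epochs k = 1..K, epoch length D = T %/ K.
   Resources are 'I_m, arrival types 'I_n.  The sample path is
   omega : nat -> 'I_n (omega t = j^t, only t in 1..T matters).
   Prices mu t k' i = mu^t_{k' i}, proxies xt t k' i = tilde x^t_{k' i},
   a t k' i = a^t_{k' i}; g k i, rho k i for epochs k. *)

Definition epoch (D t : nat) : nat := (t.-1 %/ D).+1.

Definition feasible (R : realFieldType) (m n : nat) (S : 'I_n -> {set 'I_m})
  (j : 'I_n) (x : 'I_m -> R) : Prop :=
  [/\ (forall i, x i = 0 \/ x i = 1), \sum_i x i <= 1
    & (forall i, i \notin S j -> x i = 0)].

Definition xdec (R : realFieldType) (m : nat) (D : nat)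
  (xt : nat -> nat -> 'I_m -> R) (t : nat) (i : 'I_m) : R :=
  xt t (epoch D t) i.

Definition Zji (R : realFieldType) (m n D : nat) (omega : nat -> 'I_n)
  (xt : nat -> nat -> 'I_m -> R) (j : 'I_n) (i : 'I_m) (t : nat) : R :=
  \sum_(1 <= s < t.+1) xdec D xt s i * (omega s == j)%:R.

Definition Zi (R : realFieldType) (m n D : nat) (omega : nat -> 'I_n)
  (xt : nat -> nat -> 'I_m -> R) (i : 'I_m) (t : nat) : R :=
  \sum_j Zji D omega xt j i t.

Definition aobj (R : realFieldType) (m K D : nat) (g : nat -> 'I_m -> R -> R)
  (xt : nat -> nat -> 'I_m -> R) (mu : nat -> nat -> 'I_m -> R)
  (t k : nat) (b : nat -> 'I_m -> R) : R :=
  \sum_(k <= k' < K.+1) (k'%:R * \sum_i g k' i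
      ((\sum_(1 <= s < (k.-1 * D).+1) xdec D xt s i) / (k' * D)%:R
       + \sum_(k <= k'' < k'.+1) b k'' i / k'%:R))
  + \sum_(k <= k' < K.+1) \sum_i mu t k' i * b k' i.

(* (mu, xt, a) is an execution of Dual Gradient Descent with Proxy Assignments
   (stepsize eta, initial prices mu1) on sample path omega, for some
   tie-breaking in the argmins. *)
Definition DGDPA_run (R : realFieldType) (m n K T : nat)
  (c : 'I_n -> 'I_m -> R) (S : 'I_n -> {set 'I_m}) (g : nat -> 'I_m -> R -> R)
  (eta : R) (mu1 : nat -> 'I_m -> R) (omega : nat -> 'I_n)
  (mu xt a : nat -> nat -> 'I_m -> R) : Prop :=
  let D := (T %/ K)%N in
  forall t, (1 <= t <= T)%N ->
  let k := epoch D t in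
  [/\ (if t == (k.-1 * D).+1
       then forall k' i, (k <= k' <= K)%N -> mu t k' i = mu1 k' i
       else forall k' i, (k <= k' <= K)%N ->
              mu t k' i = mu t.-1 k' i + eta * (a t.-1 k' i - xt t.-1 k' i)),
      (forall k', (k <= k' <= K)%N ->
         feasible S (omega t) (xt t k') /\
         forall y, feasible S (omega t) y ->
           \sum_i xt t k' i * (c (omega t) i - mu t k' i)
             <= \sum_i y i * (c (omega t) i - mu t k' i)),
      (forall k' i, (k <= k' <= K)%N -> 0 <= a t k' i <= 1)
    & (forall b : nat -> 'I_m -> R,
         (forall k' i, (k <= k' <= K)%N -> 0 <= b k' i <= 1) ->
         aobj K D g xt mu t k (a t) <= aobj K D g xt mu t k b)].

Definition Vcost (R : realFieldType) (m n K T : nat) (c : 'I_n -> 'I_m -> R)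
  (g : nat -> 'I_m -> R -> R) (omega : nat -> 'I_n)
  (xt : nat -> nat -> 'I_m -> R) : R :=
  let D := (T %/ K)%N in
  \sum_j \sum_i c j i * Zji D omega xt j i T
  + D%:R * \sum_(1 <= k < K.+1) \sum_i
      k%:R * g k i (Zi D omega xt i (k * D) / (k * D)%:R).

(* tilde Z_{ji,k}((k1-1)T/K : k2 T/K) *)
Definition Ztji (R : realFieldType) (m n D : nat) (omega : nat -> 'I_n)
  (xt : nat -> nat -> 'I_m -> R) (j : 'I_n) (i : 'I_m) (k k1 k2 : nat) : R :=
  \sum_((k.-1 * D).+1 <= t < (k * D).+1)
     \sum_(k1 <= k'' < k2.+1) xt t k'' i * (omega t == j)%:R.

Definition Zti (R : realFieldType) (m n D : nat) (omega : nat -> 'I_n)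
  (xt : nat -> nat -> 'I_m -> R) (i : 'I_m) (k k1 k2 : nat) : R :=
  \sum_j Ztji D omega xt j i k k1 k2.

Definition Vtilde (R : realFieldType) (m n K T : nat) (c : 'I_n -> 'I_m -> R)
  (g : nat -> 'I_m -> R -> R) (omega : nat -> 'I_n)
  (xt : nat -> nat -> 'I_m -> R) (k : nat) (z : 'I_m -> R) : R :=
  let D := (T %/ K)%N in
  \sum_j \sum_i c j i * Ztji D omega xt j i k k K
  + D%:R * \sum_(k <= k' < K.+1) \sum_i
      k'%:R * g k' i ((z i + Zti D omega xt i k k k') / (k' * D)%:R).

Definition convex_on01 (R : realFieldType) (f : R -> R) : Prop :=
  forall x y l, 0 <= x <= 1 -> 0 <= y <= 1 -> 0 <= l <= 1 ->
    f (l * x + (1 - l) * y) <= l * f x + (1 - l) * f y.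

Definition lipschitz_on01 (R : realFieldType) (L : R) (f : R -> R) : Prop :=
  forall x y, 0 <= x <= 1 -> 0 <= y <= 1 -> `|f x - f y| <= L * `|x - y|.

(* Main.v *)
Require Import Defs.
From mathcomp Require Import all_boot all_order all_algebra.
From mathcomp Require Import ring zify.
Set Implicit Arguments. Unset Strict Implicit.
Import Order.TTheory GRing.Theory Num.Theory.
Local Open Scope ring_scope.

Definition Ek (R : realFieldType) (m n D : nat) (omega : nat -> 'I_n)
  (xt : nat -> nat -> 'I_m -> R) (j : 'I_n) (i : 'I_m) (k : nat) : R :=
  \sum_((k.-1 * D).+1 <= t < (k * D).+1) xt t k i * (omega t == j)%:R.

Lemma epoch_in (D k s : nat) : (0 < k)%N -> (k.-1 * D < s <= k * D)%N ->
  epoch D s = k.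
Proof.
move=> hk /andP[h1 h2]; rewrite /epoch.
have hD : (0 < D)%N.
  case: D h1 h2 => [|d] //; by rewrite !muln0 => /leq_trans H /H.
have -> : s.-1 = (k.-1 * D + (s.-1 - k.-1 * D))%N.
  case: s h1 h2 => [|s] //= h1 h2; rewrite subnKC //.
rewrite divnMDl // divn_small ?addn0; first by case: k hk {h1 h2}.
have hkD : (k * D = k.-1 * D + D)%N by case: k hk {h1 h2} => [|k] //= _; rewrite mulSn addnC.
rewrite hkD in h2; move: h1 h2; set q := (k.-1 * D)%N; lia.
Qed.

Section S.
Variables (R : realFieldType) (m n : nat) (D : nat) (omega : nat -> 'I_n)
  (xt : nat -> nat -> 'I_m -> R).

Lemma Ztji_split j i k k2 : (k <= k2)%N ->
  Ztji D omega xt j i k k k2 = Ek D omega xt j i k + Ztji D omega xt j i k k.+1 k2.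
Proof.
move=> h; rewrite /Ztji /Ek -big_split /=; apply: eq_bigr => t _.
by rewrite big_ltn // ltnS.
Qed.

Lemma Ztji_empty j i k : Ztji D omega xt j i k k.+1 k = 0.
Proof. by rewrite /Ztji big1 // => t _; rewrite big_geq. Qed.

Lemma Zti_split i k k2 : (k <= k2)%N ->
  Zti D omega xt i k k k2 = \sum_j Ek D omega xt j i k + Zti D omega xt i k k.+1 k2.
Proof.
move=> h; rewrite /Zti -big_split /=; apply: eq_bigr => j _; exact: Ztji_split.
Qed.

Lemma Zti_empty i k : Zti D omega xt i k k.+1 k = 0.
Proof. by rewrite /Zti big1 // => j _; rewrite Ztji_empty. Qed.

Lemma Zji_step j i k : (0 < k)%N ->
  Zji D omega xt j i (k * D) = Zji D omega xt j i (k.-1 * D) + Ek D omega xt j i k.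
Proof.
move=> hk; rewrite /Zji (big_cat_nat _ (n := (k.-1 * D).+1)) //=; last first.
  by rewrite ltnS leq_mul2r leq_pred orbT.
congr (_ + _); apply: eq_big_nat => s hs.
by rewrite /xdec (epoch_in hk).
Qed.

Lemma Zi_step i k : (0 < k)%N ->
  Zi D omega xt i (k.-1 * D) + \sum_j Ek D omega xt j i k = Zi D omega xt i (k * D).
Proof.
move=> hk; rewrite /Zi -big_split /=; apply: eq_bigr => j _.
by rewrite (Zji_step _ _ hk).
Qed.

Lemma Zji_sum j i N :
  Zji D omega xt j i (N * D) = \sum_(1 <= k < N.+1) Ek D omega xt j i k.
Proof.
elim: N => [|N IH].
  by rewrite mul0n /Zji !big_geq.
by rewrite (Zji_step _ _ (ltn0Sn N)) /= IH (big_nat_recr _ _ _ (ltn0Sn N)).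
Qed.

End S.

Lemma perk (R : realFieldType) (m n K T : nat)
  (c : 'I_n -> 'I_m -> R) (g : nat -> 'I_m -> R -> R) (omega : nat -> 'I_n)
  (xt : nat -> nat -> 'I_m -> R) (k : nat) (hk1 : (0 < k)%N) (hk2 : (k <= K)%N) :
  Vtilde K T c g omega xt k (fun i => Zi (T %/ K) omega xt i (k.-1 * (T %/ K)))
  - \sum_j \sum_i c j i * Ztji (T %/ K) omega xt j i k k.+1 K
  - (T %/ K)%:R * \sum_(k.+1 <= k' < K.+1) \sum_i
       k'%:R * g k' i ((Zi (T %/ K) omega xt i (k * (T %/ K))
                         + Zti (T %/ K) omega xt i k k.+1 k') / (k' * (T %/ K))%:R)
  = \sum_j \sum_i c j i * Ek (T %/ K) omega xt j i k
    + (T %/ K)%:R * \sum_i k%:R * g k i (Zi (T %/ K) omega xt i (k * (T %/ K))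
                                          / (k * (T %/ K))%:R).
Proof.
rewrite /Vtilde; cbv beta zeta.
set D := (T %/ K)%N.
have hc : \sum_j \sum_i c j i * Ztji D omega xt j i k k K =
   \sum_j \sum_i c j i * Ek D omega xt j i k
   + \sum_j \sum_i c j i * Ztji D omega xt j i k k.+1 K.
  rewrite -big_split; apply: eq_bigr => j _; rewrite -big_split; apply: eq_bigr => i _.
  by rewrite Ztji_split // mulrDr.
rewrite hc (big_ltn (_ : (k < K.+1)%N)) ?ltnS //.
under [X in _ + _ * (X + _) - _ - _]eq_bigr => i _ do
  rewrite Zti_split // Zti_empty addr0 Zi_step //.
have hS : \sum_(k.+1 <= k' < K.+1) \sum_i k'%:R * g k' i
   ((Zi D omega xt i (k.-1 * D) + Zti D omega xt i k k k') / (k' * D)%:R)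
  = \sum_(k.+1 <= k' < K.+1) \sum_i k'%:R * g k' i
   ((Zi D omega xt i (k * D) + Zti D omega xt i k k.+1 k') / (k' * D)%:R).
  apply: eq_big_nat => k' /andP[h1 h2]; apply: eq_bigr => i _.
  by rewrite Zti_split ?(ltnW h1) // addrA Zi_step.
rewrite hS; ring.
Qed.

Theorem proposition3 (R : realFieldType) (m n K T : nat)
  (hK : (0 < K)%N) (hKT : (K %| T)%N)
  (c : 'I_n -> 'I_m -> R) (S : 'I_n -> {set 'I_m})
  (rho : nat -> 'I_m -> R) (g : nat -> 'I_m -> R -> R) (L : R)
  (hrho : forall k i, (1 <= k <= K)%N -> 0 <= rho k i <= 1)
  (hgconv : forall k i, (1 <= k <= K)%N -> convex_on01 (g k i))
  (hglip : forall k i, (1 <= k <= K)%N -> lipschitz_on01 L (g k i))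
  (hgnn : forall k i (x : R), (1 <= k <= K)%N -> 0 <= x <= 1 -> 0 <= g k i x)
  (hgrho : forall k i, (1 <= k <= K)%N -> g k i (rho k i) = 0)
  (eta : R) (mu1 : nat -> 'I_m -> R) (omega : nat -> 'I_n)
  (mu xt a : nat -> nat -> 'I_m -> R)
  (hrun : DGDPA_run K T c S g eta mu1 omega mu xt a) :
  let D := (T %/ K)%N in
  Vcost K T c g omega xt =
    \sum_(1 <= k < K.+1) Vtilde K T c g omega xt k
                            (fun i => Zi D omega xt i (k.-1 * D))
  - \sum_(1 <= k < K.+1) \sum_j \sum_i c j i * Ztji D omega xt j i k k.+1 K
  - \sum_(1 <= k < K.+1) D%:R * \sum_(k.+1 <= k' < K.+1) \sum_i
       k'%:R * g k' i ((Zi D omega xt i (k * D) + Zti D omega xt i k k.+1 k')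
                        / (k' * D)%:R).
Proof.
move=> D; rewrite {}/D -!sumrB.
rewrite (eq_big_nat _ _ (F2 := fun k => \sum_j \sum_i c j i * Ek (T %/ K) omega xt j i k
    + (T %/ K)%:R * \sum_i k%:R * g k i (Zi (T %/ K) omega xt i (k * (T %/ K))
                                          / (k * (T %/ K))%:R))); last first.
  move=> k /andP[h1 h2]; exact: perk.
rewrite big_split /= /Vcost; cbv zeta; rewrite -mulr_sumr; congr (_ + _).
have hT : T = (K * (T %/ K))%N by rewrite mulnC divnK.
have hZ : forall j i, Zji (T %/ K) omega xt j i T =
    \sum_(1 <= k < K.+1) Ek (T %/ K) omega xt j i k.
  move=> j i; rewrite -Zji_sum; congr Zji; exact: hT.
transitivity (\sum_j \sum_(1 <= k < K.+1) \sum_i c j i * Ek (T %/ K) omega xt j i k).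
  apply: eq_bigr => j _; rewrite exchange_big; apply: eq_bigr => i _.
  rewrite hZ mulr_sumr; done.
by rewrite exchange_big.
Qed.
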